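(* Let $A(0)=1$ and $A(n)=nA(n-1)+1$ for $n\ge1$, and for $k\ge1$ let $c_k$ be the unique integer in $[0,2^k)$ with $A(c_k)\equiv0\pmod{2^k}$. Then for all $k\ge1$, $$c_{k+1}=\begin{cases}c_k & \text{if } 2^{k+1}\mid A(c_k),\\ c_k+2^k & \text{otherwise.}\end{cases}$$
   Context: For each $k\ge1$ there is exactly one integer $n\in[0,2^k)$ with $A(n)\equiv 0\pmod{2^k}$; this is $c_k$. *)

(* Defs.v *)
From mathcomp Require Import all_boot.
Set Implicit Arguments. Unset Strict Implicit. Unset Printing Implicit Defensive.

Fixpoint A (n : nat) : nat :=
  match n with
  | 0 => 1
  | m.+1 => m.+1 * A m + 1
  end.

(* c is "a" (by the context: the unique) integer in [0, 2^k) with 2^k | A(c). *)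
Definition is_c (k c : nat) : Prop := c < 2 ^ k /\ 2 ^ k %| A c.

(* Main.v *)
Require Import Defs.
From mathcomp Require Import all_boot.
From Stdlib Require Import Lia.
From mathcomp Require Import zify.

Lemma oddA n : odd (A n) = ~~ odd n.
Proof.
elim: n => [//|n IH] /=.
by rewrite addn1 /= oddM IH /=; case: (odd n).
Qed.

Lemma stepA (M n : nat) : 0 < M ->
  exists q, A (n + 2 * M) = A n + 2 * M * odd n + 2 * (2 * M) * q.
Proof.
move=> M0; elim: n => [|n [q IH]].
  exists (A (2 * M).-1)./2.
  have h : 2 * M = (2 * M).-1.+1 by lia.
  rewrite add0n /= muln0 addn0.
  have ho : odd (A (2 * M).-1) = false.
    rewrite oddA; have : odd ((2*M).-1.+1) = false by rewrite -h oddM.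
    by rewrite /= => ->.
  have := odd_double_half (A (2 * M).-1); rewrite ho add0n => e.
  rewrite {1}h /= -h -{1}e; rewrite -!muln2; lia.
rewrite addSn /= IH.
have := odd_double_half (A n); rewrite oddA => e.
have := odd_double_half n => en.
case on: (odd n) e en => /= e en.
- exists ((n./2).+1 + (A n)./2 + M + (n.+1 + 2 * M) * q).
  rewrite -e -[in LHS]en -[in RHS]en; rewrite -!muln2; nia.
- exists ((A n)./2 + (n.+1 + 2 * M) * q).
  rewrite -[in LHS]e -[in RHS]e -[in LHS]en -[in RHS]en; rewrite -!muln2; nia.
Qed.

Lemma per1 (k x : nat) : 0 < k -> A (x + 2 ^ k) = A x %[mod 2 ^ k].
Proof.
move=> k0; have eN : 2 ^ k = 2 * 2 ^ k.-1 by rewrite -expnS prednK.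
have [q Hq] := @stepA (2 ^ k.-1) x (expn_gt0 2 k.-1).
rewrite -eN in Hq; rewrite Hq -addnA -mulnA [2 * (2 ^ k * q)]mulnCA -mulnDr.
by rewrite addnC mulnC modnMDl.
Qed.

Lemma perA (k n m : nat) : 0 < k -> A (n + m * 2 ^ k) = A n %[mod 2 ^ k].
Proof.
move=> k0; elim: m => [|m IH]; first by rewrite mul0n addn0.
by rewrite mulSn addnCA addnC (per1 _ _ k0).
Qed.

Lemma divper k a : 0 < k -> (2 ^ k %| A a) = (2 ^ k %| A (a %% 2 ^ k)).
Proof.
move=> k0; rewrite /dvdn {1}(divn_eq a (2 ^ k)) addnC.
by rewrite (perA _ _ _ k0).
Qed.

Lemma zodd k a : 0 < k -> 2 ^ k %| A a -> odd a.
Proof.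
move=> k0 h; have : 2 %| A a.
  by apply: dvdn_trans h; rewrite -{1}(expn1 2) dvdn_exp2l.
by rewrite dvdn2 oddA negbK.
Qed.

Lemma nz k c : 0 < k -> odd c -> 2 ^ k.+1 %| A c -> ~~ (2 ^ k.+1 %| A (c + 2 ^ k)).
Proof.
move=> k0 oc h; have eN : 2 ^ k = 2 * 2 ^ k.-1 by rewrite -expnS prednK.
have [q Hq] := @stepA (2 ^ k.-1) c (expn_gt0 2 k.-1).
rewrite -eN -expnS in Hq; rewrite Hq oc muln1 -addnA (dvdn_addr _ h).
rewrite (dvdn_addl _ (dvdn_mulr _ (dvdnn _))).
apply/negP => /dvdn_leq; rewrite expn_gt0 /= => /(_ isT).
by rewrite leqNgt ltn_exp2l // ltnSn.
Qed.

Lemma uniqc k a b : a < 2 ^ k -> b < 2 ^ k -> 2 ^ k %| A a -> 2 ^ k %| A b -> a = b.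
Proof.
elim: k a b => [|k IH] a b.
  by rewrite expn0 => ha hb; lia.
move=> ha hb da db.
have oa := zodd _ _ (isT : 0 < k.+1) da.
have ob := zodd _ _ (isT : 0 < k.+1) db.
case: (posnP k) => [k0|k0].
  subst k; clear da db; rewrite expn1 in ha hb.
  by move: ha hb oa ob; case: a => [|[|a]] //; case: b => [|[|b]].
have dk : 2 ^ k %| 2 ^ k.+1 by rewrite dvdn_exp2l.
have da' := dvdn_trans dk da; have db' := dvdn_trans dk db.
rewrite (divper _ _ k0) in da'; rewrite (divper _ _ k0) in db'.
have N0 : 0 < 2 ^ k by rewrite expn_gt0.
have e := IH _ _ (ltn_pmod a N0) (ltn_pmod b N0) da' db'.
have ia : a %/ 2 ^ k < 2 by rewrite ltn_divLR // -expnS.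
have ib : b %/ 2 ^ k < 2 by rewrite ltn_divLR // -expnS.
have Ea := divn_eq a (2 ^ k); have Eb := divn_eq b (2 ^ k).
have oc : odd (a %% 2 ^ k).
  by rewrite odd_mod // oddX orbF eqn0Ngt k0.
move: Ea Eb ia ib; case: (a %/ 2 ^ k) => [|[|i]] //; case: (b %/ 2 ^ k) => [|[|j]] //.
- by move=> Ea Eb _ _; rewrite Ea Eb e.
- move=> Ea Eb _ _; exfalso; rewrite mul1n in Eb.
  have := nz _ _ k0 oc. rewrite mul0n add0n in Ea.
  rewrite e addnC -Eb db -e -Ea da; by move/(_ isT).
- move=> Ea Eb _ _; exfalso; rewrite mul1n in Ea.
  rewrite mul0n add0n in Eb. rewrite e in oc.
  have := nz _ _ k0 oc.
  rewrite -e addnC -Ea da e -Eb db; by move/(_ isT).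
- by move=> Ea Eb _ _; rewrite Ea Eb e.
Qed.

Theorem corollaryA11 (k ck ck1 : nat) :
  0 < k -> is_c k ck -> is_c k.+1 ck1 ->
  ck1 = (if 2 ^ k.+1 %| A ck then ck else ck + 2 ^ k).
Proof.
move=> k0 [hc dc] [hc1 dc1].
have N0 : 0 < 2 ^ k by rewrite expn_gt0.
have dk : 2 ^ k %| 2 ^ k.+1 by rewrite dvdn_exp2l.
have d1 := dvdn_trans dk dc1; rewrite (divper _ _ k0) in d1.
have e := uniqc _ _ _ (ltn_pmod ck1 N0) hc d1 dc.
have ia : ck1 %/ 2 ^ k < 2 by rewrite ltn_divLR // -expnS.
have E := divn_eq ck1 (2 ^ k); rewrite e in E.
have hck : ck < 2 ^ k.+1 by rewrite expnS; lia.
case: ifP => h.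
  exact: uniqc _ _ _ hc1 hck dc1 h.
move: E ia; case: (ck1 %/ 2 ^ k) => [|[|i]] //.
  by rewrite mul0n add0n => E; rewrite -E dc1 in h.
by rewrite mul1n addnC.
Qed.
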